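(* Let $\Omega$ be an algebraically closed field and let $C$ be a non-empty finite set of elements of $\Omega^\times$. Then there exist only finitely many inequivalent decompositions of the form $C=A_1\cdots A_k$ with each $\#A_i>1$.
   Context: For finite multisets $A,B$ of elements of $\Omega^\times$, $AB=\{ab:a\in A,b\in B\}$ denotes the multiset of pairwise products (and $A_1\cdots A_k$ is defined iteratively); for a single element $a$, $aB=\{a\}B$. Write $A\sim B$ if there is $\xi\in\Omega^\times$ with $\xi A=B$. Two decompositions $C=A_1\cdots A_k$ and $C=B_1\cdots B_l$ (equalities of multisets, the $A_i,B_j$ being finite multisets in $\Omega^\times$) are equivalent if $k=l$ and, after reordering, $A_i\sim B_i$ for every $i$. *)

(* Defs.v *)
(* Finite multisets are represented by sequences, compared up
   to permutation (perm_eq). *)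
From HB Require Import structures.
From mathcomp Require Import all_boot all_order all_algebra all_field.
Set Implicit Arguments. Unset Strict Implicit. Unset Printing Implicit Defensive.
Import GRing.Theory.
Local Open Scope ring_scope.

Definition in_units (F : fieldType) (A : seq F) : Prop := all (fun a => a != 0) A.

Definition mmul (F : fieldType) (A B : seq F) : seq F :=
  [seq a * b | a <- A, b <- B].

Definition mprod (F : fieldType) (As : seq (seq F)) : seq F :=
  match As with
  | [::] => [:: 1]
  | A :: rest => foldl (@mmul F) A rest
  end.

Definition msim (F : fieldType) (A B : seq F) : Prop :=
  exists xi : F, xi != 0 /\ perm_eq [seq xi * a | a <- A] B.

Definition dec_equiv (F : fieldType) (As Bs : seq (seq F)) : Prop :=
  exists Bs' : seq (seq F), perm_eq Bs Bs' /\ size As = size Bs' /\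
    forall i, (i < size As)%N -> msim (nth [::] As i) (nth [::] Bs' i).

Definition is_decomp (F : fieldType) (C : seq F) (As : seq (seq F)) : Prop :=
  (0 < size As)%N /\
  (forall A, A \in As -> in_units A /\ (1 < size A)%N) /\
  perm_eq C (mprod As).

(* Main.v *)
Require Import Defs.
From HB Require Import structures.
From mathcomp Require Import all_boot all_order all_algebra all_field.
Import GRing.Theory.
Local Open Scope ring_scope.

Section Aux.
Variable F : fieldType.

Lemma mmul_scale (c d : F) A B :
  mmul [seq c * x | x <- A] [seq d * x | x <- B] = [seq (c * d) * x | x <- mmul A B].
Proof.
rewrite /mmul; elim: A => [|a A IH] //=; rewrite map_cat IH; congr (_ ++ _).
by rewrite -!map_comp; apply: eq_map => b /=; rewrite mulrACA.
Qed.

Lemma foldl_scale (f : seq F -> F) (rest : seq (seq F)) : forall A c,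
  foldl (@mmul F) [seq c * x | x <- A] [seq [seq f R * x | x <- R] | R <- rest] =
  [seq (c * \prod_(R <- rest) f R) * x | x <- foldl (@mmul F) A rest].
Proof.
elim: rest => [|R rest IH] A c /=; first by rewrite big_nil mulr1.
by rewrite mmul_scale IH big_cons mulrA.
Qed.

Lemma foldl_mem1 (rest : seq (seq F)) : forall (A : seq F) (x : F), x \in A -> (forall R, R \in rest -> 1 \in R) ->
  x \in foldl (@mmul F) A rest.
Proof.
elim: rest => [|R rest IH] A x //= xA h.
apply: IH; last by move=> R' R'in; apply: h; rewrite inE R'in orbT.
rewrite -[x]mulr1; apply: allpairs_f => //; apply: h; exact: mem_head.
Qed.

Lemma foldl_mem2 (rest : seq (seq F)) : forall (A : seq F) (x y : F) (R : seq F), x \in A -> R \in rest -> y \in R ->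
  (forall R, R \in rest -> 1 \in R) -> x * y \in foldl (@mmul F) A rest.
Proof.
elim: rest => [|R0 rest IH] A x y R //= xA; rewrite inE => /orP [/eqP -> | Rin] yR h.
  apply: foldl_mem1; first exact: allpairs_f.
  by move=> R' R'in; apply: h; rewrite inE R'in orbT.
rewrite -[x]mulr1; apply: (IH _ _ _ R) => //.
  by apply: allpairs_f => //; apply: h; exact: mem_head.
by move=> R' R'in; apply: h; rewrite inE R'in orbT.
Qed.

Lemma foldl_size1 (rest : seq (seq F)) : forall A : seq F, (forall R, R \in rest -> 1 < size R)%N ->
  (size A * 2 ^ size rest <= size (foldl (@mmul F) A rest))%N.
Proof.
elim: rest => [|R rest IH] A //= h; first by rewrite muln1.
apply: leq_trans (IH _ _); last by move=> R' R'in; apply: h; rewrite inE R'in orbT.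
rewrite /mmul size_allpairs expnS mulnA leq_mul2r leq_mul2l.
by rewrite h ?mem_head // !orbT.
Qed.

Lemma foldl_size2 (rest : seq (seq F)) : forall (A : seq F) R, (0 < size A)%N ->
  (forall R, R \in rest -> 1 < size R)%N -> R \in rest ->
  (size R <= size (foldl (@mmul F) A rest))%N.
Proof.
elim: rest => [|R0 rest IH] A R //= hA h; rewrite inE => /orP [/eqP -> | Rin].
  apply: (leq_trans _ (@foldl_size1 rest (mmul A R0) _)); first last.
    by move=> R' R'in; apply: h; rewrite inE R'in orbT.
  rewrite /mmul size_allpairs [(size A * _)%N]mulnC -mulnA; apply: leq_pmulr; by rewrite muln_gt0 hA expn_gt0.
apply: IH => //; last by move=> R' R'in; apply: h; rewrite inE R'in orbT.
by rewrite /mmul size_allpairs muln_gt0 hA ltnW // h ?mem_head.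
Qed.

End Aux.
Arguments foldl_scale {F}. Arguments foldl_mem1 {F}. Arguments foldl_mem2 {F}. Arguments foldl_size1 {F}. Arguments foldl_size2 {F}.

Fixpoint lists {T : Type} (S : seq T) n : seq (seq T) :=
  if n is n'.+1 then [seq x :: t | x <- S, t <- lists S n'] else [:: [::]].
Definition upto {T : Type} (S : seq T) n := flatten [seq lists S k | k <- iota 0 n.+1].

Lemma mem_upto (T : eqType) (S : seq T) n s :
  (size s <= n)%N -> (forall x, x \in s -> x \in S) -> s \in upto S n.
Proof.
move=> hs /(@allP _ (fun x => x \in S)) hall; apply/flatten_mapP; exists (size s); first by rewrite mem_iota.
elim: s hall {hs} => [|x s IH] /=; first by rewrite inE.
by move/andP=> [xS sS]; apply: (allpairs_f (fun a b => a :: b)) => //; apply: IH.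
Qed.

Theorem lemma4p3 (Omega : closedFieldType) (C : seq Omega) :
  C != [::] -> uniq C -> in_units C ->
  exists Ds : seq (seq (seq Omega)),
    forall As : seq (seq Omega), is_decomp C As ->
      exists2 Bs, Bs \in Ds & dec_equiv As Bs.
Proof.
move=> _ _ hC.
set T := C ++ [seq c / d | c <- C, d <- C].
exists (upto (upto T (size C)) (size C)).
case=> [|A1 rest] [//= _ [hA hperm]].
rewrite /mprod in hperm.
have Cnz : forall x, x \in C -> x != 0 by move=> x; move/allP: hC; apply.
have hAs : forall R, R \in rest -> in_units R /\ (1 < size R)%N.
  by move=> R Rin; apply: hA; rewrite inE Rin orbT.
have [hA1u hA1s] := hA A1 (mem_head _ _).
pose a (R : seq Omega) := head 0 R.
have ha : forall R, R \in rest -> a R \in R /\ a R != 0.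
  move=> R /hAs [hu]; case: R hu => [|x R] //= /andP [xnz _] _.
  by rewrite mem_head.
pose P := \prod_(R <- rest) a R.
have Pnz : P != 0.
  rewrite /P big_seq; apply: (big_ind (fun x => x != 0)) => //.
    by rewrite oner_eq0.
  by move=> x y; rewrite mulf_eq0 negb_or => -> ->.
  by move=> R /ha [].
pose B1 := [seq P * x | x <- A1].
pose Brest := [seq [seq (a R)^-1 * x | x <- R] | R <- rest].
have hM : foldl (@mmul _) B1 Brest = foldl (@mmul _) A1 rest.
  rewrite /B1 /Brest (foldl_scale (fun R => (a R)^-1)).
  have -> : P * \prod_(R <- rest) (a R)^-1 = 1.
    rewrite /P -big_split /=; apply: big1_seq => R /andP [_ Rin].
    by rewrite mulfV //; case: (ha R Rin).
  by rewrite (eq_map (@mul1r _)) map_id.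
set M := foldl (@mmul _) A1 rest in hM hperm.
have MC : forall x, x \in M -> x \in C by move=> x; rewrite (perm_mem hperm).
have h1 : forall R, R \in Brest -> 1 \in R.
  move=> R /mapP [R0 R0in ->]; have [aR anz] := ha R0 R0in.
  by rewrite -(mulVf anz); apply: map_f.
have hBs : forall R, R \in Brest -> (1 < size R)%N.
  by move=> R /mapP [R0 R0in ->]; rewrite size_map; case: (hAs R0 R0in).
have sM : size M = size C by rewrite (perm_size hperm).
have B1ne : (0 < size B1)%N by rewrite size_map ltnW.
have B1C : forall x, x \in B1 -> x \in C.
  by move=> x xB; apply: MC; rewrite -hM; apply: foldl_mem1.
exists (B1 :: Brest).
  apply: mem_upto.
    have := foldl_size1 Brest B1 hBs; rewrite hM sM => hle.
    apply: leq_trans hle; rewrite /=.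
    apply: leq_trans (ltn_expl (size Brest) (isT : 1 < 2)%N) _.
    by rewrite leq_pmull.
  move=> R; rewrite inE => /orP [/eqP -> | RB].
    apply: mem_upto.
      by rewrite -sM -hM; have := foldl_size1 Brest B1 hBs; apply: leq_trans; rewrite leq_pmulr // expn_gt0.
    by move=> x /B1C xC; rewrite mem_cat xC.
  apply: mem_upto.
    by rewrite -sM -hM; apply: foldl_size2.
  move=> y yR.
  case: B1 B1ne B1C hM => [|b B1'] //= _ B1C hM.
  have bC : b \in C by apply: B1C; rewrite mem_head.
  have byC : b * y \in C.
    by apply: MC; rewrite -hM; apply: (foldl_mem2 _ _ _ _ R) => //; rewrite mem_head.
  rewrite mem_cat; apply/orP; right.
  have -> : y = (b * y) / b by rewrite mulrC mulrA mulVf ?mul1r // Cnz.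
  exact: allpairs_f.
exists (B1 :: Brest); split; first exact: perm_refl.
split; first by rewrite /= size_map.
case=> [|i] /= hi.
  by exists P; split => //; apply: perm_refl.
rewrite /Brest (nth_map [::]) //.
have Rin := mem_nth [::] hi.
exists (a (nth [::] rest i))^-1; split; last exact: perm_refl.
by rewrite invr_eq0; case: (ha _ Rin).
Qed.
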